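(* Let $R$ be a $*$-ring with $2\in U(R)$. The following are equivalent: (1) $R$ is clean and every unit $u$ of $R$ satisfies $u^*=u$; (2) $R$ is $*$-clean and $*$ is the identity map of $R$.
   Context: A $*$-ring is a ring with identity with an involution $*$. A projection is $p$ with $p^2=p=p^*$. $R$ is clean if every element is a sum of an idempotent and a unit; $*$-clean if every element is a sum of a projection and a unit. *)

(* Defs.v *)
From mathcomp Require Import all_boot all_order all_algebra.
Set Implicit Arguments. Unset Strict Implicit. Unset Printing Implicit Defensive.
Import GRing.Theory.
Local Open Scope ring_scope.

Definition is_unit (R : pzRingType) (u : R) : Prop :=
  exists v : R, u * v = 1 /\ v * u = 1.

Definition idempotent_el (R : pzRingType) (e : R) : Prop := e * e = e.

Definition involution (R : pzRingType) (star : R -> R) : Prop :=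
  (forall a b, star (a + b) = star a + star b) /\
  (forall a b, star (a * b) = star b * star a) /\
  (forall a, star (star a) = a).

Definition projection (R : pzRingType) (star : R -> R) (p : R) : Prop :=
  p * p = p /\ star p = p.

Definition clean (R : pzRingType) : Prop :=
  forall x : R, exists e u, idempotent_el e /\ is_unit u /\ x = e + u.

Definition star_clean (R : pzRingType) (star : R -> R) : Prop :=
  forall x : R, exists p u, projection star p /\ is_unit u /\ x = p + u.

(* Main.v *)
Require Import Defs.
From mathcomp Require Import all_boot all_order all_algebra.
Local Open Scope ring_scope.
Import GRing.Theory.

Theorem corollary2p4 (R : pzRingType) (star : R -> R) :
  involution star -> is_unit (2 : R) ->
  ((clean R /\ forall u : R, is_unit u -> star u = u) <->
   (star_clean star /\ forall x : R, star x = x)).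
Proof.
move=> [sD [sM sK]] [w [w1 w2]]; split.
- move=> [cl fix_u].
  have fixe : forall e : R, e * e = e -> star e = e.
    move=> e ee.
    set a := 1 - (e + e).
    have aa : a * a = 1.
      rewrite /a mulrBl mul1r mulrBr mulr1 mulrDl !mulrDr ee.
      by rewrite opprB addrK subrK.
    have ua : is_unit a by exists a.
    have s1 : star 1 = 1 by apply: fix_u; exists 1; rewrite mulr1.
    have h1 : (1 : R) = a + (e + e) by rewrite /a subrK.
    have h2 : e + e = star e + star e.
      apply: (@addrI _ a); rewrite -h1.
      by rewrite -sD -{1}(fix_u _ ua) -sD -h1 s1.
    have : w * (2 * e) = w * (2 * star e).
      by rewrite !mulr_natl !mulr2n h2.
    by rewrite !mulrA w2 !mul1r.
  have fx : forall x, star x = x.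
    move=> x; have [e [u [ee [uu ->]]]] := cl x.
    by rewrite sD fixe // fix_u.
  split=> // x; have [e [u [ee [uu ->]]]] := cl x.
  by exists e, u; split=> //; split.
- move=> [sc fx]; split; last by move=> u _; apply: fx.
  move=> x; have [p [u [[pp _] [uu ->]]]] := sc x.
  by exists p, u.
Qed.
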